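(* Let $n\geq 4$ be even and let $\mathrm{D}_{2n}=\langle a,b\mid a^n=b^2=1,\ b^{-1}ab=a^{-1}\rangle$. Let $H\subseteq\langle a^2\rangle$ and $K\subseteq a\langle a^2\rangle$ satisfy $H^{-1}=H$ and $K^{-1}=K$. Put $S=bH\cup K$ and $T=bH\cup bK$. Then $\mathrm{Cay}(\mathrm{D}_{2n},S)\cong\mathrm{Cay}(\mathrm{D}_{2n},T)$. In particular, if $\mathrm{D}_{2n}$ has the $|S|$-DCI property, then $K=\emptyset$.
   Context: For a group $G$ and a subset $S\subseteq G$ with $1\notin S$, the Cayley digraph $\mathrm{Cay}(G,S)$ has vertex set $G$ and arc set $\{(g,sg)\mid g\in G,\ s\in S\}$. $\mathrm{Cay}(G,S)$ is a CI-digraph if for every $T\subseteq G$ with $1\notin T$ and $\mathrm{Cay}(G,T)\cong\mathrm{Cay}(G,S)$ there is $\alpha\in\mathrm{Aut}(G)$ with $S^\alpha=T$. For a positive integer $m$, $G$ has the $m$-DCI property if every Cayley digraph $\mathrm{Cay}(G,S)$ with $|S|=m$ is a CI-digraph. $H^{-1}=\{h^{-1}\mid h\in H\}$. *)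

(* Defs.v *)
From mathcomp Require Import all_boot all_fingroup.
Set Implicit Arguments. Unset Strict Implicit. Unset Printing Implicit Defensive.
Local Open Scope group_scope.

Definition cay_arc (gT : finGroupType) (S : {set gT}) (x y : gT) : bool :=
  y * x^-1 \in S.

Definition cay_iso (gT : finGroupType) (G : {set gT}) (S T : {set gT}) : Prop :=
  exists f : gT -> gT,
    [/\ {in G &, injective f}, f @: G = G &
        {in G &, forall x y, cay_arc S x y = cay_arc T (f x) (f y)}].

Definition CI_digraph (gT : finGroupType) (G : {group gT}) (S : {set gT}) : Prop :=
  forall T : {set gT}, T \subset G -> 1 \notin T -> cay_iso G S T ->
    exists2 alpha : {perm gT}, alpha \in Aut G & alpha @: S = T.

Definition DCI_property (gT : finGroupType) (G : {group gT}) (m : nat) : Prop :=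
  forall S : {set gT}, S \subset G -> 1 \notin S -> #|S| = m -> CI_digraph G S.

Definition dihedral_pres (gT : finGroupType) (G : {group gT}) (n : nat) (a b : gT) : Prop :=
  [/\ G = <<[set a; b]>> :> {set gT}, a ^+ n = 1, b ^+ 2 = 1,
      b^-1 * a * b = a^-1 & #|G| = n.*2].

(* Main.v *)
Require Import Defs.
From mathcomp Require Import all_boot all_fingroup.
From mathcomp Require Import all_solvable zify.
Local Open Scope group_scope.

Theorem lemma3p2 (gT : finGroupType) (G : {group gT}) (n : nat) (a b : gT)
  (H K : {set gT}) :
  (4 <= n)%N -> ~~ odd n -> dihedral_pres G n a b ->
  H \subset <[a ^+ 2]> -> K \subset a *: <[a ^+ 2]> ->
  H^-1 = H -> K^-1 = K ->
  cay_iso G (b *: H :|: K) (b *: H :|: b *: K) /\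
  (DCI_property G #|b *: H :|: K| -> K = set0).
Proof.
move=> n4 evn [GE an b2 bab cardG] sHa sKa HV KV.
have aG : a \in G by rewrite GE; apply: mem_gen; rewrite !inE eqxx.
have bG : b \in G by rewrite GE; apply: mem_gen; rewrite !inE eqxx orbT.
have bV : b^-1 = b by rewrite -[b^-1]mulg1 -b2 expgS expg1 mulKg.
have ab : a ^ b = a^-1 by rewrite conjgE mulgA bab.
have zb : forall z, z \in <[a]> -> z ^ b = z^-1.
  by move=> z /cycleP [j ->]; rewrite conjXg ab expVgn.
have nb : forall c, c \in <[a]> -> b \in 'N(<[c]>).
  by move=> c ca; apply/normP; rewrite -cycleJ zb // cycleV.
have bpow : forall j, b ^+ j = 1 \/ b ^+ j = b.
  elim=> [|j [IH|IH]]; first by left.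
    by right; rewrite expgS IH mulg1.
  by left; rewrite expgS IH -b2 expgS expg1.
have Gdec : forall x, x \in G -> x \in <[a]> \/ exists2 c, c \in <[a]> & x = c * b.
  have sGM : G \subset <[a]> * <[b]>.
    rewrite -norm_joinEr; last by rewrite cycle_subG nb // cycle_id.
    rewrite GE gen_subG; apply/subsetP => x; rewrite !inE => /orP [] /eqP ->.
      by rewrite (subsetP (joing_subl _ _)) // cycle_id.
    by rewrite (subsetP (joing_subr _ _)) // cycle_id.
  move=> x /(subsetP sGM) /mulsgP [c z ca /cycleP [j ->] ->].
  by case: (bpow j) => ->; [left; rewrite mulg1 | right; exists c].
have sGU : G \subset <[a]> :|: <[a]> :* b.
  apply/subsetP => x /Gdec [xa|[c ca ->]]; rewrite inE ?xa //.
  by rewrite mem_rcoset mulgK ca orbT.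
have oa : #[a] = n.
  have le1 : (#|G| <= #[a] + #[a])%N.
    apply: leq_trans (subset_leq_card sGU) _.
    by rewrite cardsU card_rcoset leq_subr.
  have : (#[a] %| n)%N by rewrite order_dvdn an.
  move/dvdn_leq; rewrite cardG in le1; lia.
have bna : b \notin <[a]>.
  apply/negP => ba; have : G \subset <[a]>.
    apply/subsetP => x /Gdec [//|[c ca ->]]; exact: groupM.
  move/subset_leq_card; rewrite cardG [#|<[a]>|]oa; lia.
have a2a : a ^+ 2 \in <[a]> by apply: mem_cycle.
pose L := (<[a ^+ 2]> <*> <[b]>)%G.
have LE : L :=: <[a ^+ 2]> * <[b]> by rewrite /= norm_joinEr // cycle_subG nb.
have sA2L : <[a ^+ 2]> \subset L by apply: joing_subl.
have bL : b \in L by rewrite (subsetP (joing_subr _ _)) // cycle_id.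
have LG : L \subset G by rewrite join_subG !cycle_subG groupX.
have sA2a : <[a ^+ 2]> \subset <[a]> by rewrite cycle_subG.
have aL : a \notin L.
  rewrite LE; apply/negP => /mulsgP [c z /cycleP [j ->] /cycleP [k ->]].
  case: (bpow k) => -> ae.
    move: ae; rewrite mulg1 -expgM => /eqP; rewrite -{1}(expg1 a) eq_expg_mod_order oa.
    move/eqP => e.
    move: e n4; rewrite -(odd_double_half n) (negbTE evn) add0n.
    lia.
  move/negP: bna; apply; have -> : b = ((a ^+ 2) ^+ j)^-1 * a by rewrite {2}ae mulKg.
  by rewrite groupM ?groupV ?groupX ?cycle_id.
have abe : a * b = b * a^-1 by rewrite -bab !mulgA mulgV mul1g.
have apow : forall j, a ^+ j \in L \/ exists2 l, l \in L & a ^+ j = l * a.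
  move=> j; rewrite -(odd_double_half j) -muln2 mulnC expgD expgM.
  case: (odd j) => /=.
    right; exists ((a ^+ 2) ^+ j./2); first by rewrite (subsetP sA2L) // mem_cycle.
    by rewrite expg1 -expgM -expgS expgSr.
  by left; rewrite mul1g (subsetP sA2L) // mem_cycle.
have aVe : (a ^+ 2)^-1 * a = a^-1 by rewrite expgS expg1 invMg mulgKV.
have Lpar : forall x, x \in G -> x \notin L -> exists2 l, l \in L & x = l * a.
  move=> x /Gdec [/cycleP [j ->]|[c /cycleP [j ->] ->]].
    by case: (apow j) => [->|//].
  case: (apow j) => [jL|[l lL ->]]; first by rewrite groupM.
  move=> _; exists (l * b * (a ^+ 2)^-1).
    by rewrite !groupM // groupV; apply: (subsetP sA2L); apply: cycle_id.
  by rewrite -!mulgA aVe abe.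
have Ha : H \subset <[a]> := subset_trans sHa sA2a.
have HL : forall z, z \in H -> z \in L := subsetP (subset_trans sHa sA2L).
have Ka : K \subset <[a]>.
  apply/subsetP => z /(subsetP sKa); rewrite mem_lcoset => /(subsetP sA2a) za.
  by rewrite -(mulKVg a z) groupM ?cycle_id.
have KnL : forall z, z \in L -> (z \in K) = false.
  move=> z zL; apply/negbTE/negP => /(subsetP sKa); rewrite mem_lcoset => /(subsetP sA2L) azL.
  move/negP: aL; apply; have -> : a = z * (a^-1 * z)^-1 by rewrite invMg invgK mulKVg.
  by rewrite groupM ?groupV.
have bHL : forall z, z \in b *: H -> z \in L.
  by move=> z; rewrite mem_lcoset => /HL bzL; rewrite -(mulKVg b z) groupM.
have conjX : forall X : {set gT}, X \subset <[a]> -> X^-1 = X ->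
    forall z, (z ^ b \in X) = (z \in X).
  move=> X Xa XV z; apply/idP/idP => zX.
    have zbX := subsetP Xa _ zX.
    by rewrite -(conjgK b z) bV zb // -XV inE invgK.
  by rewrite zb ?(subsetP Xa) // -XV inE invgK.
have nH : forall w, w \notin L -> (w \in H) = false.
  by move=> w; apply: contraNF; apply: HL.
pose f x := if x \in L then x else b * x.
have arc : forall x y, x \in G -> y \in G ->
    (y * x^-1 \in b *: H :|: K) = (f y * (f x)^-1 \in b *: H :|: b *: K).
  move=> x y xG yG; rewrite /f !in_setU.
  case: (boolP (x \in L)) => xL; case: (boolP (y \in L)) => yL.
  - have zL : y * x^-1 \in L by rewrite groupM ?groupV.
    by rewrite KnL // [_ \in b *: K]mem_lcoset KnL ?orbF // groupM ?groupV.
  - have zL : y * x^-1 \notin L by apply: contra yL => zL; rewrite -(mulgKV x y) groupM.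
    rewrite !mem_lcoset -!mulgA mulKg.
    have -> : (b^-1 * (y * x^-1) \in H) = false by apply/negbTE; apply: contra zL => /HL bzL; rewrite -(mulKVg b (y * x^-1)) groupM.
    by rewrite (negbTE (contra (HL _) zL)).
  - have zL : y * x^-1 \notin L.
      apply: contra xL => zL; have -> : x = (y * x^-1)^-1 * y by rewrite invMg invgK mulgKV.
      by rewrite groupM ?groupV.
    have e : b^-1 * (y * (x^-1 * b^-1)) = (y * x^-1) ^ b by rewrite conjgE bV !mulgA.
    rewrite !mem_lcoset invMg e (conjX K Ka KV) (nH (b^-1 * (y * x^-1))) ?nH ?groupJr //.
    by apply: contra zL => h; rewrite -(mulKVg b (y * x^-1)) groupM.
  - have zL : y * x^-1 \in L.
      have [l1 l1L ->] := Lpar x xG xL; have [l2 l2L ->] := Lpar y yG yL.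
      by rewrite invMg mulgA mulgK groupM ?groupV.
    have bb : b * b = 1 by rewrite -expg2 b2.
    have e2 : b^-1 * (b * y * (x^-1 * b^-1)) = (b^-1 * (y * x^-1)) ^ b.
      by rewrite conjgE bV !mulgA bb !mul1g.
    have wL : b^-1 * (b * y * (x^-1 * b^-1)) \in L.
      by rewrite -[b * y * _]mulgA mulKg mulgA groupM ?groupV.
    by rewrite KnL // orbF !mem_lcoset invMg (KnL _ wL) orbF e2 (conjX H Ha HV).
have iso : cay_iso G (b *: H :|: K) (b *: H :|: b *: K).
  have finj : {in G &, injective f}.
    move=> x y xG yG; rewrite /f.
    case: (boolP (x \in L)) => xL; case: (boolP (y \in L)) => yL //.
    - by move=> e; case/negP: yL; rewrite -(mulKg b y) -e groupM ?groupV.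
    - by move=> e; case/negP: xL; rewrite -(mulKg b x) e groupM ?groupV.
    - exact: mulgI.
  exists f; split; [exact: finj| |by move=> x y xG yG; rewrite /cay_arc arc].
  apply/eqP; rewrite eqEcard card_in_imset // leqnn andbT.
  apply/subsetP => _ /imsetP [x xG ->]; rewrite /f; case: ifP => _ //.
  by rewrite groupM // (subsetP LG).
split => // dci.
have bnot : forall X : {set gT}, X \subset <[a]> -> forall z, z \in b *: X -> z \notin <[a]>.
  move=> X Xa z; rewrite mem_lcoset => /(subsetP Xa) bz; apply/negP => za.
  case/negP: bna; have -> : b = z * (b^-1 * z)^-1 by rewrite invMg invgK mulKVg.
  by rewrite groupM ?groupV.
have aGs : <[a]> \subset G by rewrite cycle_subG.
have sSG : b *: H :|: K \subset G.
  apply/subsetP => z; rewrite inE => /orP [/bHL /(subsetP LG) //|/(subsetP Ka) /(subsetP aGs) //].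
have S1 : 1 \notin b *: H :|: K.
  rewrite inE negb_or KnL ?group1 // andbT; apply/negP => /(bnot H Ha).
  by rewrite group1.
have sTG : b *: H :|: b *: K \subset G.
  apply/subsetP => z; rewrite inE !mem_lcoset => /orP [] /(subsetP (subset_trans _ aGs)) h.
    by rewrite -(mulKVg b z) groupM // h.
  by rewrite -(mulKVg b z) groupM // h.
have T1 : 1 \notin b *: H :|: b *: K.
  rewrite inE negb_or; apply/andP; split.
    by apply/negP => /(bnot H Ha); rewrite group1.
  by apply/negP => /(bnot K Ka); rewrite group1.
have [alpha Aa aST] := dci _ sSG S1 erefl _ sTG T1 iso.
apply/setP => k; rewrite inE; apply/negbTE/negP => kK.
have akT : alpha k \in b *: H :|: b *: K by rewrite -aST imset_f // inE kK orbT.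
have mor := morphicP (Aut_morphic Aa).
have alpha1 : alpha 1 = 1.
  have e := mor 1 1 (group1 G) (group1 G); rewrite mulg1 in e.
  by apply: (mulgI (alpha 1)); rewrite mulg1 -e.
have apowm : forall j, alpha (a ^+ j) = alpha a ^+ j.
  elim=> [|j IH]; first by rewrite !expg0 alpha1.
  by rewrite !expgS mor ?groupX // IH.
have aa : alpha a \in <[a]>.
  case: (Gdec _ (Aut_closed Aa aG)) => // [[c ca e]]; exfalso.
  have : alpha (a ^+ 2) = alpha 1.
    rewrite apowm alpha1 e expgS expg1.
    have -> : c * b * (c * b) = c * c ^ b by rewrite conjgE bV !mulgA.
    by rewrite zb // mulgV.
  move/perm_inj/eqP; rewrite -order_dvdn oa => /dvdn_leq h.
  by move: (h isT) n4; clear; lia.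
have aka : alpha k \in <[a]>.
  by have /cycleP [j ->] := subsetP Ka _ kK; rewrite apowm groupX.
move: akT; rewrite inE => /orP [/(bnot H Ha)|/(bnot K Ka)]; by rewrite aka.
Qed.
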